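(* Let $X$ be a $\sigma$-compact metrizable Suslin space with no isolated points, let $f:X\to Y$ be any function, and let $T=L_f$. (1) If $Y$ is a compact Fréchet space, then $T$ is closed and $T\cap(\{x\}\times Y)\neq\emptyset$ for each $x\in X$. (2) If $Y$ is a $\sigma$-compact but not compact Fréchet space, then $T$ is closed and there is a countable set $D\subseteq X$ such that $T\cap(\{x\}\times Y)\neq\emptyset$ for each $x\in X\setminus D$.
   Context: $L_f$ denotes the set of accumulation points in $X\times Y$ of the graph $gr(f)=\{(x,f(x)):x\in X\}$. A Suslin space is a Hausdorff continuous image of a Polish space. A Fréchet space is a locally convex topological vector space complete with respect to a translation invariant metric. A space is $\sigma$-compact if it is a countable union of compact sets. *)

(* Defs.v *)
From HB Require Import structures.
From mathcomp Require Import all_boot all_order all_algebra.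
From mathcomp Require Import all_classical all_reals all_analysis.
Set Implicit Arguments. Unset Strict Implicit. Unset Printing Implicit Defensive.
Import Order.TTheory GRing.Theory Num.Theory.
Local Open Scope classical_set_scope.
Local Open Scope ring_scope.

Section Defs.
Variable R : realType.

Definition is_metric (T : Type) (d : T -> T -> R) : Prop :=
  [/\ (forall x y, 0 <= d x y),
      (forall x y, d x y = 0 <-> x = y),
      (forall x y, d x y = d y x) &
      (forall x y z, d x z <= d x y + d y z)].

Definition metric_induces (T : topologicalType) (d : T -> T -> R) : Prop :=
  forall (x : T) (A : set T),
    nbhs x A <-> exists2 e : R, 0 < e & [set y | d x y < e] `<=` A.

Definition metric_complete (T : Type) (d : T -> T -> R) : Prop :=
  forall u : nat -> T,
    (forall e : R, 0 < e -> exists N : nat, forall m n : nat,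
        (N <= m)%N -> (N <= n)%N -> d (u m) (u n) < e) ->
    exists l : T, forall e : R, 0 < e -> exists N : nat, forall n : nat,
        (N <= n)%N -> d (u n) l < e.

Definition metrizable (T : topologicalType) : Prop :=
  exists d : T -> T -> R, is_metric d /\ metric_induces d.

Definition completely_metrizable (T : topologicalType) : Prop :=
  exists d : T -> T -> R, [/\ is_metric d, metric_induces d & metric_complete d].

Definition separable_space (T : topologicalType) : Prop :=
  exists D : set T, countable D /\ closure D = setT.

Definition polish_space (T : topologicalType) : Prop :=
  separable_space T /\ completely_metrizable T.

Definition suslin_space (T : topologicalType) : Prop :=
  hausdorff_space T /\
  exists (P : topologicalType) (g : P -> T),
    [/\ polish_space P, continuous g & g @` setT = setT].

(** Fréchet space: locally convex tvs (tvsType is locally convex) complete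
    w.r.t. a translation invariant metric inducing its topology *)
Definition frechet_space (Y : tvsType R) : Prop :=
  exists d : Y -> Y -> R,
    [/\ is_metric d, metric_induces d,
        (forall x y z : Y, d (x + z) (y + z) = d x y) & metric_complete d].

End Defs.

Definition sigma_compact (T : topologicalType) : Prop :=
  exists K : nat -> set T, (forall n, compact (K n)) /\ \bigcup_n K n = setT.

Definition no_isolated_points (T : topologicalType) : Prop :=
  forall x : T, ~ open [set x].

Definition graph_of (X Y : Type) (f : X -> Y) : set (X * Y) :=
  [set p | p.2 = f p.1].

Definition Lf (X Y : topologicalType) (f : X -> Y) : set (X * Y) :=
  limit_point (graph_of f).

(* Main.v *)
Require Import Defs.
From HB Require Import structures.
From mathcomp Require Import all_boot all_order all_algebra.
From mathcomp Require Import all_classical all_reals all_analysis.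
From Stdlib Require Import Classical.
From mathcomp Require Import lra.
Import Order.TTheory GRing.Theory Num.Theory.
Local Open Scope classical_set_scope.

Lemma keyL (X Y : topologicalType) (f : X -> Y) (K : set Y) (x0 : X) :
  compact K -> (forall y, K y -> ~ Lf f (x0, y)) ->
  \forall x' \near x0, x' != x0 -> ~ K (f x').
Proof.
move=> /compact_near_coveringP cK nL.
have : \forall i \near nbhs x0, K `<=` (fun y => i != x0 -> f i != y).
  apply: cK => y Ky; have := nL y Ky; rewrite /Lf not_limit_pointE => -[W nW sW].
  case: nW => -[A B] [/= nA nB] sAB.
  exists (B, A) => //= -[y' i] [/= By' Ai] ix0; apply/eqP => fiy.
  have : (graph_of f `&` W) (i, y') by split; [rewrite /graph_of /= fiy | apply: sAB].
  by move=> /sW [] /eqP; rewrite (negbTE ix0).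
apply: filterS => i HK ix0 Kfi.
by have /eqP := HK _ Kfi ix0.
Qed.

Lemma closed_limit_point (T : topologicalType) (E : set T) :
  (forall p : T, closed [set p]) -> closed (limit_point E).
Proof.
move=> c1; rewrite -openC openE => p /= nLp.
have := nLp; rewrite not_limit_pointE => -[W nW sW].
move: nW; rewrite nbhsE => -[V [oV Vp] VW].
rewrite /interior; apply: (@filterS _ _ _ V); last exact: open_nbhs_nbhs.
move=> q Vq; case: (eqVneq q p) => [-> //|qp].
change (~ limit_point E q); rewrite not_limit_pointE; exists (V `&` ~` [set p]).
  apply: open_nbhs_nbhs; split; last by split => // /= qp'; rewrite qp' eqxx in qp.
  by apply: openI => //; rewrite openC.
by move=> z [Ez [Vz zp]]; exfalso; apply: zp; apply: sW; split => //; apply: VW.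
Qed.

Lemma closed_set1_prod (X Y : topologicalType) :
  (forall x : X, closed [set x]) -> (forall y : Y, closed [set y]) ->
  forall p : X * Y, closed [set p].
Proof.
move=> cX cY [x y]; rewrite -openC openE => -[x' y'] /= nq.
case: (pselect (x' = x)) => [ex|nx].
- have ny : y' <> y by move=> ey; apply: nq; rewrite ex ey.
  have : nbhs y' (~` [set y]) by apply: open_nbhs_nbhs; split => //; rewrite openC.
  move=> nB; exists (setT, ~` [set y]); first by split => //; apply: filterT.
  by move=> [a b] [_ /= bn] [_ eb]; apply: bn.
- have : nbhs x' (~` [set x]) by apply: open_nbhs_nbhs; split => //; rewrite openC.
  move=> nA; exists (~` [set x], setT); first by split => //; apply: filterT.
  by move=> [a b] [/= an _] [ea _]; apply: an.
Qed.

Lemma metric_closed_set1 (R : realType) (T : topologicalType) (d : T -> T -> R) :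
  is_metric d -> metric_induces d -> forall y : T, closed [set y].
Proof.
move=> [d0 dE dS dT] dind y; rewrite -openC openE => z /= zy.
rewrite /interior; apply/(dind z _).2; exists (d z y).
  by rewrite lt0r d0 andbT; apply/eqP => /dE.
by move=> w /= dw ew; rewrite ew ltxx in dw.
Qed.

Local Open Scope ring_scope.

Theorem proposition5p1 (R : realType) (X : topologicalType) (Y : tvsType R)
  (f : X -> Y) :
  sigma_compact X -> metrizable R X -> suslin_space R X -> no_isolated_points X ->
  frechet_space Y ->
  (compact [set: Y] ->
     closed (Lf f) /\ (forall x : X, exists y : Y, Lf f (x, y))) /\
  (sigma_compact Y -> ~ compact [set: Y] ->
     closed (Lf f) /\
     exists D : set X, countable D /\
       forall x : X, ~ D x -> exists y : Y, Lf f (x, y)).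
Proof.
move=> _ [d [dm dind]] [hX [P [g [[[D0 [cD0 clD0]] _] cg sg]]]] niso.
move=> [dY [dYm dYind _ _]].
have clL : closed (Lf f).
  apply: closed_limit_point; apply: closed_set1_prod.
    exact: accessible_closed_set1 (hausdorff_accessible hX).
  exact: metric_closed_set1 dYm dYind.
split.
  move=> cY; split=> // x; apply: NNPP => nex.
  have := @keyL _ _ f setT x cY (fun y _ Ly => nex (ex_intro _ y Ly)) => H.
  apply: (niso x); rewrite openE => z /= ->.
  apply: filterS H => x' Hx'.
  by case: (eqVneq x' x) => // /Hx' /(_ I).
move=> [KY [cKY UKY]] _; split => //.
have [dm0 dmE dmS dmT] := dm.
pose D := [set x | ~ exists y, Lf f (x, y)].
exists D; split; last by move=> x /NNPP.
have hch : forall x, exists t : nat * R * P, D x ->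
    [/\ KY t.1.1 (f x), 0 < t.1.2, d x (g t.2) < t.1.2 / 2, D0 t.2 &
      forall x', d x x' < t.1.2 -> x' != x -> ~ KY t.1.1 (f x')].
  move=> x; have : (g @` setT) x by rewrite sg.
  move=> [p0 _ gp0].
  case: (pselect (D x)) => Dx; last by exists (0%N, 0, p0).
  have : (\bigcup_n KY n) (f x) by rewrite UKY.
  move=> [n _ Kn].
  have := @keyL _ _ f (KY n) x (cKY n) (fun y _ Ly => Dx (ex_intro _ y Ly)).
  move=> /(dind x _).1 [e e0 sub].
  have e20 : 0 < e / 2 by rewrite divr_gt0.
  have hb : nbhs (g p0) [set z | d x z < e / 2].
    by rewrite gp0; apply/(dind x _).2; exists (e / 2).
  have : closure D0 p0 by rewrite clD0.
  move=> /(_ _ (cg p0 _ hb)) [p [D0p /= dp]].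
  exists (n, e, p) => _ /=; split => // x' dx' x'x; exact: sub.
have [F HF] := choice hch.
have /countable_injP [h hinj] := cD0.
apply/countable_injP; exists (fun x => pickle ((F x).1.1, h (F x).2)).
move=> x x'; rewrite !inE => Dx Dx' /(pcan_inj pickleK) [] en eh.
have ep : (F x).2 = (F x').2.
  by apply: hinj => //; rewrite inE; [case: (HF x Dx) | case: (HF x' Dx')].
move: (HF x Dx) (HF x' Dx') en ep; case: (F x) => -[n e] p.
case: (F x') => -[n' e'] p' /= [Kx e0 dx _ sx] [Kx' e0' dx' _ sx'] nn pp.
subst n' p'.
apply: NNPP => nxx.
have tri : d x x' < e / 2 + e' / 2.
  apply: le_lt_trans (dmT x (g p) x') _.
  by rewrite (dmS (g p) x'); apply: ltrD.
case: (leP e e') => ee.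
- apply: (sx' x) => //; last by apply/eqP.
  rewrite dmS; apply: lt_le_trans tri _; lra.
- apply: (sx x') => //; last by apply/eqP => /esym.
  apply: lt_le_trans tri _; lra.
Qed.
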